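(* Let $T_\mathrm{i}>T_\mathrm{o}^{\mathrm{OA}}>0$, $U_\mathrm{i}>0$, $U_\mathrm{o}>0$, $\Omega_\mathrm{c}\ge 0$, $\Omega_\mathrm{h}\ge 0$ and $\varepsilon\in[0,1]$. For $\eta\in[0,1]$ set $\overline{T}_\mathrm{h}(\eta)=\frac{\eta T_\mathrm{i}}{U_\mathrm{i}}$ and $\overline{T}_\mathrm{c}(\eta)=\frac{(1-\eta)T_\mathrm{o}^{\mathrm{OA}}}{U_\mathrm{o}}$, and consider the problem $$\max_{0\le\eta\le1}\ \eta T_\mathrm{i}+(1-\eta)T_\mathrm{o}^{\mathrm{OA}}\quad\text{subject to}\quad \overline{T}_\mathrm{c}(\eta)\ge\Omega_\mathrm{c},\ \ \overline{T}_\mathrm{h}(\eta)\ge\Omega_\mathrm{h},\ \ \overline{T}_\mathrm{c}(\eta)\ge\varepsilon\,\overline{T}_\mathrm{h}(\eta).$$ Let $$\eta^\ast=\min\left(1-\frac{\Omega_\mathrm{c}U_\mathrm{o}}{T_\mathrm{o}^{\mathrm{OA}}},\ \left(1+\varepsilon\frac{U_\mathrm{o}T_\mathrm{i}}{U_\mathrm{i}T_\mathrm{o}^{\mathrm{OA}}}\right)^{-1}\right).$$ If $\eta^\ast\ge\frac{\Omega_\mathrm{h}U_\mathrm{i}}{T_\mathrm{i}}$, then $\eta^\ast$ is feasible and is an optimal solution of the problem.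
   Context: Interpretation: in shared access a femtocell access point allocates a fraction $\eta$ of its time slots to its $U_\mathrm{i}$ home users (zone throughput $T_\mathrm{i}$) and $1-\eta$ to $U_\mathrm{o}$ neighboring cellular users (zone throughput $T_\mathrm{o}^{\mathrm{OA}}$); $\Omega_\mathrm{c},\Omega_\mathrm{h}$ are minimum per-user throughputs and $\varepsilon$ a fairness parameter. *)

(* Defs.v *)
From Stdlib Require Import Reals.
Open Scope R_scope.

Definition Th_bar (Ti Ui eta : R) : R := eta * Ti / Ui.
Definition Tc_bar (To Uo eta : R) : R := (1 - eta) * To / Uo.

Definition objective (Ti To eta : R) : R := eta * Ti + (1 - eta) * To.

Definition feasible (Ti To Ui Uo Oc Oh eps eta : R) : Prop :=
  0 <= eta <= 1 /\
  Tc_bar To Uo eta >= Oc /\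
  Th_bar Ti Ui eta >= Oh /\
  Tc_bar To Uo eta >= eps * Th_bar Ti Ui eta.

Definition optimal (Ti To Ui Uo Oc Oh eps eta : R) : Prop :=
  feasible Ti To Ui Uo Oc Oh eps eta /\
  forall eta', feasible Ti To Ui Uo Oc Oh eps eta' ->
    objective Ti To eta' <= objective Ti To eta.

Definition eta_star (Ti To Ui Uo Oc eps : R) : R :=
  Rmin (1 - Oc * Uo / To) (/ (1 + eps * (Uo * Ti) / (Ui * To))).

(* Main.v *)
Require Import Defs.
From Stdlib Require Import Reals Lra.
Open Scope R_scope.

Lemma Tc_iff (To Uo Oc e : R) : To > 0 -> Uo > 0 ->
  (Tc_bar To Uo e >= Oc <-> e <= 1 - Oc * Uo / To).
Proof.
  intros; unfold Tc_bar.
  assert (H1 : (1 - e) * To / Uo = ((1 - e) * To) * / Uo) by (unfold Rdiv; ring).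
  assert (H2 : Oc * Uo / To = (Oc * Uo) * / To) by (unfold Rdiv; ring).
  rewrite H1, H2.
  assert (0 < / Uo) by (apply Rinv_0_lt_compat; lra).
  assert (0 < / To) by (apply Rinv_0_lt_compat; lra).
  assert (Uo * / Uo = 1) by (field; lra).
  assert (To * / To = 1) by (field; lra).
  split; intro.
  - assert ((1 - e) * To >= Oc * Uo).
    { assert (((1 - e) * To * / Uo) * Uo >= Oc * Uo) by nra.
      replace (((1 - e) * To * / Uo) * Uo) with ((1-e)*To) in H8 by (field; lra). lra. }
    assert ((1 - e) * To * / To >= Oc * Uo * / To) by nra.
    replace ((1 - e) * To * / To) with (1-e) in H9 by (field; lra). lra.
  - assert ((1 - e) >= Oc * Uo * / To) by lra.
    assert ((1 - e) * To >= Oc * Uo * / To * To) by nra.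
    replace (Oc * Uo * / To * To) with (Oc*Uo) in H9 by (field; lra).
    assert ((1 - e) * To * / Uo >= Oc * Uo * / Uo) by nra.
    replace (Oc * Uo * / Uo) with Oc in H10 by (field; lra). lra.
Qed.

Lemma Fair_iff (Ti To Ui Uo eps e : R) : Ti > 0 -> To > 0 -> Ui > 0 -> Uo > 0 -> 0 <= eps ->
  (Tc_bar To Uo e >= eps * Th_bar Ti Ui e <->
   e <= / (1 + eps * (Uo * Ti) / (Ui * To))).
Proof.
  intros; unfold Tc_bar, Th_bar.
  set (k := eps * (Uo * Ti) / (Ui * To)).
  assert (Hk : 0 <= k).
  { unfold k, Rdiv. apply Rmult_le_pos. apply Rmult_le_pos; nra.
    left; apply Rinv_0_lt_compat; nra. }
  assert (E1 : (1 - e) * To / Uo - eps * (e * Ti / Ui) = (To / Uo) * (1 - e * (1 + k))).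
  { unfold k; field; lra. }
  assert (E2 : e * (1 + k) - 1 = (1 + k) * (e - / (1 + k))) by (field; lra).
  assert (0 < To / Uo) by (unfold Rdiv; apply Rmult_lt_0_compat; [lra| apply Rinv_0_lt_compat; lra]).
  split; intro.
  - assert (0 <= (To / Uo) * (1 - e * (1 + k))) by lra.
    assert (0 <= 1 - e * (1 + k)).
    { destruct (Rle_dec 0 (1 - e * (1 + k))); auto. nra. }
    assert (0 >= (1 + k) * (e - / (1 + k))) by lra.
    destruct (Rle_dec e (/ (1 + k))); auto. nra.
  - assert (0 >= (1 + k) * (e - / (1 + k))) by nra.
    assert (0 <= (To / Uo) * (1 - e * (1 + k))) by nra.
    lra.
Qed.

Theorem proposition1 (Ti To Ui Uo Oc Oh eps : R) :
  Ti > To -> To > 0 -> Ui > 0 -> Uo > 0 -> Oc >= 0 -> Oh >= 0 ->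
  0 <= eps <= 1 ->
  eta_star Ti To Ui Uo Oc eps >= Oh * Ui / Ti ->
  feasible Ti To Ui Uo Oc Oh eps (eta_star Ti To Ui Uo Oc eps) /\
  optimal Ti To Ui Uo Oc Oh eps (eta_star Ti To Ui Uo Oc eps).
Proof.
  intros HTi HTo HUi HUo HOc HOh Heps Hst.
  set (a := 1 - Oc * Uo / To) in *.
  set (b := / (1 + eps * (Uo * Ti) / (Ui * To))) in *.
  assert (Hst' : eta_star Ti To Ui Uo Oc eps = Rmin a b) by reflexivity.
  set (s := eta_star Ti To Ui Uo Oc eps) in *.
  assert (Hk : 0 <= eps * (Uo * Ti) / (Ui * To)).
  { unfold Rdiv. apply Rmult_le_pos. apply Rmult_le_pos; nra.
    left; apply Rinv_0_lt_compat; nra. }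
  assert (Hb1 : b <= 1).
  { unfold b. replace 1 with (/1) at 2 by apply Rinv_1. apply Rinv_le_contravar; lra. }
  assert (Hsa : s <= a) by (rewrite Hst'; apply Rmin_l).
  assert (Hsb : s <= b) by (rewrite Hst'; apply Rmin_r).
  assert (H0 : 0 <= Oh * Ui / Ti).
  { unfold Rdiv. apply Rmult_le_pos. nra. left; apply Rinv_0_lt_compat; lra. }
  assert (HTh : Th_bar Ti Ui s >= Oh).
  { unfold Th_bar.
    assert (s * Ti >= Oh * Ui / Ti * Ti) by nra.
    replace (Oh * Ui / Ti * Ti) with (Oh * Ui) in H by (field; lra).
    assert (s * Ti / Ui >= Oh * Ui / Ui).
    { unfold Rdiv. assert (0 < / Ui) by (apply Rinv_0_lt_compat; lra). nra. }
    replace (Oh * Ui / Ui) with Oh in H1 by (field; lra). lra. }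
  unfold a in Hsa; unfold b in Hsb, Hb1.
  assert (F : feasible Ti To Ui Uo Oc Oh eps s).
  { split; [lra|]. split; [apply Tc_iff; lra|]. split; [exact HTh|].
    apply Fair_iff; lra. }
  split; [exact F|]. split; [exact F|].
  intros e' [He1 [He2 [He3 He4]]].
  apply Tc_iff in He2; try lra. apply Fair_iff in He4; try lra.
  assert (e' <= s) by (rewrite Hst'; apply Rmin_glb; assumption).
  unfold objective. nra.
Qed.
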